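(* Let $R$ be a commutative ring with unit and let $M_0\prec M\subset\mathbb{M}_R$. Then the homomorphism $\rho^R_{M,M_0}\colon R[q]^M\to R[q]^{M_0}$ is injective.
   Context: All rings are commutative with unit; $q$ is an indeterminate. $\mathbb{M}_R$ denotes the set of monic polynomials in $R[q]$. For $M\subset\mathbb{M}_R$, $M^*$ is the multiplicative set generated by $M$, directed by divisibility, and $R[q]^M=\varprojlim_{f\in M^*}R[q]/(f)$; for $M'\subset M$, $\rho^R_{M,M'}\colon R[q]^M\to R[q]^{M'}$ is induced by the identity of $R[q]$. For $f,g\in\mathbb{M}_R$ write $f\Rightarrow_R g$ if there exist an ideal $I\subset R$ with $\bigcap_{j\ge0}I^j=(0)$ and an integer $m\ge0$ such that $f^m\in (g)+I[q]$. For $M',M\subset\mathbb{M}_R$ write $M'\prec M$ if $M'\subset M$ and for each $f\in M$ there is a finite sequence $f_0\Rightarrow_R f_1\Rightarrow_R\cdots\Rightarrow_R f_r=f$ ($r\ge0$) of elements of $M$ with $f_0\in M'$. *)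

(* Defs.v *)
From mathcomp Require Import all_boot all_algebra.
Set Implicit Arguments. Unset Strict Implicit. Unset Printing Implicit Defensive.
Import GRing.Theory.
Local Open Scope ring_scope.

Section Defs.
Variable R : comNzRingType.

Definition polyset := {poly R} -> Prop.

Definition pdvd (f g : {poly R}) : Prop := exists h : {poly R}, g = h * f.

Definition pcong (f a b : {poly R}) : Prop := exists h : {poly R}, a - b = h * f.

Definition monic_set (M : polyset) : Prop := forall f, M f -> f \is monic.

Inductive mult_gen (M : polyset) : {poly R} -> Prop :=
| mg_one : mult_gen M 1
| mg_mul f g : M f -> mult_gen M g -> mult_gen M (f * g).

Definition is_ideal (I : R -> Prop) : Prop :=
  [/\ I 0, (forall x y, I x -> I y -> I (x + y)) & (forall r x, I x -> I (r * x))].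

Inductive ideal_mul (A B : R -> Prop) : R -> Prop :=
| im_zero : ideal_mul A B 0
| im_prod a b : A a -> B b -> ideal_mul A B (a * b)
| im_add x y : ideal_mul A B x -> ideal_mul A B y -> ideal_mul A B (x + y).

Fixpoint ideal_pow (I : R -> Prop) (j : nat) : R -> Prop :=
  match j with
  | O => fun _ => True
  | S j' => ideal_mul (ideal_pow I j') I
  end.

Definition impl_R (f g : {poly R}) : Prop :=
  exists I : R -> Prop,
    [/\ is_ideal I,
        (forall x, (forall j, ideal_pow I j x) -> x = 0) &
        exists (m : nat) (h k : {poly R}),
          f ^+ m = h * g + k /\ forall i, I k`_i].

Inductive chain_reach (M' M : polyset) : {poly R} -> Prop :=
| cr_base f : M' f -> M f -> chain_reach M' M f
| cr_step f g : chain_reach M' M f -> M g -> impl_R f g -> chain_reach M' M g.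

Definition prec (M' M : polyset) : Prop :=
  (forall f, M' f -> M f) /\ (forall f, M f -> chain_reach M' M f).

(* Elements of R[q]^M = lim_{f in M^*} R[q]/(f): families x (x f a
   representative of the f-component), compatible along divisibility. *)
Definition compat (M : polyset) (x : {poly R} -> {poly R}) : Prop :=
  forall f g, mult_gen M f -> mult_gen M g -> pdvd f g -> pcong f (x g) (x f).

(* Equality of two such families in R[q]^M. *)
Definition lim_eq (M : polyset) (x y : {poly R} -> {poly R}) : Prop :=
  forall f, mult_gen M f -> pcong f (x f) (y f).

End Defs.

(* Main.v *)
Require Import Defs.
From mathcomp Require Import all_boot all_algebra.
From mathcomp Require Import ring zify.
Set Implicit Arguments. Unset Strict Implicit. Unset Printing Implicit Defensive.
Import GRing.Theory.
Local Open Scope ring_scope.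

Section Aux.
Variable R : comNzRingType.
Implicit Types p q : {poly R}.

Definition polyIn (J : R -> Prop) p := forall i, J p`_i.

Lemma pow_ideal (I : R -> Prop) : is_ideal I -> forall n, is_ideal (ideal_pow I n).
Proof.
move=> [I0 ID IM] [|n] /=; first by split.
split; first exact: im_zero.
- by move=> a b Ha Hb; apply: im_add.
- move=> r a; elim=> [|u v Hu Hv|u v _ H1 _ H2].
  + by rewrite mulr0; apply: im_zero.
  + by rewrite mulrCA; apply: im_prod => //; apply: IM.
  + by rewrite mulrDr; apply: im_add.
Qed.

Lemma pow_S_sub (I : R -> Prop) (hI : is_ideal I) n x :
  ideal_pow I n.+1 x -> ideal_pow I n x.
Proof.
have [J0 JD JM] := pow_ideal hI n.
rewrite /=; elim=> [|u v Hu Hv|u v _ H1 _ H2] //.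
- by rewrite mulrC; apply: JM.
- by apply: JD.
Qed.

Lemma pow_mono (I : R -> Prop) (hI : is_ideal I) m n x :
  (m <= n)%N -> ideal_pow I n x -> ideal_pow I m x.
Proof.
elim: n => [|n IH]; first by rewrite leqn0 => /eqP ->.
rewrite leq_eqVlt => /orP [/eqP -> //| Hlt] H.
by apply: IH; [exact: Hlt | exact: pow_S_sub].
Qed.

Lemma ideal_sumP (J : R -> Prop) (hJ : is_ideal J) (n : nat) (F : 'I_n -> R) :
  (forall i, J (F i)) -> J (\sum_(i < n) F i).
Proof.
move: hJ => [J0 JD JM] H.
by apply: (big_ind J) => // i _; apply: H.
Qed.

Lemma polyIn_mull (J : R -> Prop) (hJ : is_ideal J) p q :
  polyIn J q -> polyIn J (p * q).
Proof.
move=> Hq i; rewrite coefM; apply: ideal_sumP => // j.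
by case: hJ => _ _ JM; apply: JM.
Qed.

Lemma polyIn_mulr (J : R -> Prop) (hJ : is_ideal J) p q :
  polyIn J p -> polyIn J (p * q).
Proof. by move=> Hp; rewrite mulrC; apply: polyIn_mull. Qed.

Lemma polyIn_mulS (I : R -> Prop) (hI : is_ideal I) n p q :
  polyIn (ideal_pow I n) p -> polyIn I q -> polyIn (ideal_pow I n.+1) (p * q).
Proof.
move=> Hp Hq i; rewrite coefM; apply: ideal_sumP; first exact: pow_ideal.
by move=> j /=; apply: im_prod.
Qed.

Lemma polyIn_exp (I : R -> Prop) (hI : is_ideal I) c :
  polyIn I c -> forall j, polyIn (ideal_pow I j) (c ^+ j).
Proof.
move=> Hc; elim=> [|j IH]; first by move=> i.
by rewrite exprSr; apply: polyIn_mulS.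
Qed.

Lemma polyIn_mono (I : R -> Prop) (hI : is_ideal I) m n p :
  (m <= n)%N -> polyIn (ideal_pow I n) p -> polyIn (ideal_pow I m) p.
Proof. by move=> Hmn Hp i; apply: (pow_mono hI Hmn). Qed.

Lemma rmodp_in (J : R -> Prop) (hJ : is_ideal J) p F :
  F \is monic -> polyIn J p -> polyIn J (Pdiv.CommonRing.rmodp p F).
Proof.
move=> mF Hp i.
rewrite -[p]coefK poly_def (Pdiv.RingMonic.rmodp_sum mF) coef_sum.
apply: ideal_sumP => // j.
rewrite (Pdiv.RingMonic.rmodpZ mF) coefZ.
by case: hJ => _ _ JM; rewrite mulrC; apply: JM.
Qed.

Lemma binom_split (I : R -> Prop) (hI : is_ideal I) a g c :
  polyIn I c -> forall n k, exists u v,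
    (a * g + c) ^+ (n + k) = u * g ^+ k + v /\ polyIn (ideal_pow I n) v.
Proof.
move=> Hc n k.
have hJ := pow_ideal hI n.
rewrite addrC exprDn.
apply: (big_ind (fun P => exists u v, P = u * g ^+ k + v /\ polyIn (ideal_pow I n) v)).
- by exists 0, 0; split; [rewrite mul0r addr0 | move=> i; rewrite coef0; case: hJ].
- move=> P Q [u1 [v1 [-> H1]]] [u2 [v2 [-> H2]]].
  exists (u1 + u2), (v1 + v2); split; first by ring.
  by move=> i; rewrite coefD; case: hJ => _ JD _; apply: JD.
- move=> [i Hi] _ /=.
  case: (leqP k i) => Hki.
  + exists (c ^+ (n + k - i) * a ^+ i * g ^+ (i - k) *+ 'C(n + k, i)), 0.
    split; last by move=> l; rewrite coef0; case: hJ.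
    have Eg : g ^+ i = g ^+ (i - k) * g ^+ k by rewrite -exprD subnK.
    by rewrite addr0 exprMn Eg !mulrnAl !mulrA.
  + exists 0, (c ^+ (n + k - i) * (a * g) ^+ i *+ 'C(n + k, i)).
    split; first by rewrite mul0r add0r.
    rewrite -mulr_natr; apply: polyIn_mulr => //; apply: polyIn_mulr => //.
    apply: (@polyIn_mono _ hI n (n + k - i)); last exact: polyIn_exp.
    by lia.
Qed.

Lemma combine (xG yG xP yP xF yF fj gk h u v h1 h2 h3 h4 h5 : {poly R}) :
  xG - xP = h1 * (fj * h) -> yG - yP = h2 * (fj * h) -> xP - yP = h3 * (fj * h) ->
  xG - xF = h4 * (gk * h) -> yG - yF = h5 * (gk * h) -> fj = u * gk + v ->
  xF - yF = ((h1 - h2 + h3) * u - (h4 - h5)) * (gk * h) + ((h1 - h2 + h3) * h) * v.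
Proof.
move=> e1 e2 e3 e4 e5 e6.
have -> : xF = xG - h4 * (gk * h) by rewrite -e4; ring.
have -> : yF = yG - h5 * (gk * h) by rewrite -e5; ring.
have -> : xG = xP + h1 * (fj * h) by rewrite -e1; ring.
have -> : yG = yP + h2 * (fj * h) by rewrite -e2; ring.
have -> : xP = yP + h3 * (fj * h) by rewrite -e3; ring.
rewrite e6; ring.
Qed.

Lemma mg_M (M : polyset R) f : M f -> mult_gen M f.
Proof. by move=> Hf; rewrite -[f]mulr1; apply: mg_mul => //; apply: mg_one. Qed.

Lemma mg_mulc (M : polyset R) a b : mult_gen M a -> mult_gen M b -> mult_gen M (a * b).
Proof.
move=> Ha Hb; elim: Ha => [|f g Hf _ IH]; first by rewrite mul1r.
by rewrite -mulrA; apply: mg_mul.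
Qed.

Lemma mg_exp (M : polyset R) f j : M f -> mult_gen M (f ^+ j).
Proof.
move=> Hf; elim: j => [|j IH]; first exact: mg_one.
by rewrite exprS; apply: mg_mul.
Qed.

Lemma mg_monic (M : polyset R) f : monic_set M -> mult_gen M f -> f \is monic.
Proof.
move=> Hm; elim=> [|a b Ha _ IH]; first exact: monic1.
by rewrite monicMl // Hm.
Qed.

Lemma mg_sub (M0 M : polyset R) f : (forall g, M0 g -> M g) -> mult_gen M0 f -> mult_gen M f.
Proof.
move=> H; elim=> [|a b Ha _ IH]; first exact: mg_one.
by apply: mg_mul => //; apply: H.
Qed.

Definition V (x y : {poly R} -> {poly R}) f := pcong f (x f) (y f).

Lemma keyA (M : polyset R) x y (Hmon : monic_set M) (cx : compat M x) (cy : compat M y) f g h :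
  M f -> M g -> mult_gen M h -> impl_R f g ->
  (forall j, V x y (f ^+ j * h)) -> forall k, V x y (g ^+ k * h).
Proof.
move=> Mf Mg Mh [I [hI hint [m [a [c [Hfm Hc]]]]]] HV k.
have mgF : mult_gen M (g ^+ k * h) by apply: mg_mulc => //; apply: mg_exp.
have monF : (g ^+ k * h) \is monic by apply: mg_monic mgF.
suff Hr : Pdiv.CommonRing.rmodp (x (g ^+ k * h) - y (g ^+ k * h)) (g ^+ k * h) = 0.
  exists (Pdiv.CommonRing.rdivp (x (g ^+ k * h) - y (g ^+ k * h)) (g ^+ k * h)).
  by rewrite {1}(Pdiv.RingMonic.rdivp_eq monF (x (g ^+ k * h) - y (g ^+ k * h))) Hr addr0.
apply/polyP => i; rewrite coef0; apply: hint => n.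
have [u [v [Euv Hv]]] := binom_split hI a g Hc n k.
have HfJ : f ^+ (m * (n + k)) = u * g ^+ k + v by rewrite exprM Hfm Euv.
have mgP : mult_gen M (f ^+ (m * (n + k)) * h) by apply: mg_mulc => //; apply: mg_exp.
have mgG : mult_gen M (f ^+ (m * (n + k)) * (g ^+ k * h)) by apply: mg_mulc => //; apply: mg_exp.
have dPG : pdvd (f ^+ (m * (n + k)) * h) (f ^+ (m * (n + k)) * (g ^+ k * h)).
  by exists (g ^+ k); rewrite mulrCA.
have dFG : pdvd (g ^+ k * h) (f ^+ (m * (n + k)) * (g ^+ k * h)) by exists (f ^+ (m * (n + k))).
have [h1 e1] := cx _ _ mgP mgG dPG.
have [h2 e2] := cy _ _ mgP mgG dPG.
have [h3 e3] := HV (m * (n + k))%N.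
have [h4 e4] := cx _ _ mgF mgG dFG.
have [h5 e5] := cy _ _ mgF mgG dFG.
rewrite (combine e1 e2 e3 e4 e5 HfJ).
rewrite (Pdiv.RingMonic.rmodpD monF) (Pdiv.RingMonic.rmodp_mull monF) add0r.
apply: rmodp_in => //; first exact: pow_ideal.
by apply: polyIn_mull => //; apply: pow_ideal.
Qed.

Lemma chain_M (M0 M : polyset R) g : chain_reach M0 M g -> M g.
Proof. by case. Qed.

End Aux.

Theorem theorem3p4 (R : comNzRingType) (M0 M : polyset R) :
  monic_set M -> prec M0 M ->
  forall x y : {poly R} -> {poly R},
    compat M x -> compat M y -> lim_eq M0 x y -> lim_eq M x y.
Proof.
move=> Hmon [HM0M Hch] x y cx cy eq0.
suff P : forall f, mult_gen M f -> forall h0, mult_gen M0 h0 -> V x y (f * h0).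
  move=> f Hf; have := P f Hf 1 (mg_one _); by rewrite mulr1.
move=> f; elim=> [|g f' Mg Hf' IH] h0 Hh0.
  by rewrite mul1r; apply: eq0.
have Hh0M := mg_sub HM0M Hh0.
have key : forall g, chain_reach M0 M g -> forall k h0, mult_gen M0 h0 ->
    V x y (g ^+ k * (f' * h0)).
  move=> g1; elim=> [g2 M0g2 Mg2|g2 g3 Hc IHc Mg3 Himp] k h1 Hh1.
    rewrite mulrCA; apply: IH; apply: mg_mulc => //; exact: mg_exp.
  apply: (keyA Hmon cx cy (chain_M Hc) Mg3 _ Himp) => //.
    by apply: mg_mulc => //; apply: mg_sub Hh1.
  by move=> j; apply: IHc.
have := key g (Hch g Mg) 1%N h0 Hh0.
by rewrite expr1 mulrA.
Qed.
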